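(* For all $\epsilon\in[0,1]$ and all $z\in(0,+\infty)^{d_1}\times\{0\}^{d_2}$, the limit \[ \sigma^{\mathcal D}_\epsilon(z):=\lim_{n\to\infty}\frac1n\mathbb{E}\big[S^{\mathcal D}_\epsilon(\lfloor nz\rfloor)\big] \] exists (and is finite).
   Context: Fix $d_1\ge1$, $d_2\ge0$, $d=d_1+d_2$; $\mathbb{Z}^d=\mathbb{Z}^{d_1}\times\mathbb{Z}^{d_2}$, $\mathrm{Proj}^{d_2}$ the projection on the last $d_2$ coordinates, $\lfloor\cdot\rfloor$ the coordinatewise integer part. Sites $x\in\mathbb{Z}^d$ are independently open with probability $\epsilon$. For $x,y\in\mathbb{R}^d$: $x\prec y$ iff $x_i<y_i$ for all $i\le d_1$; $x\preceq y$ iff $x_i\le y_i$ for all $i\le d_1$. For $x\preceq y$ in $\mathbb{Z}^{d_1}\times\{0\}^{d_2}$, $\mathcal{D}_\epsilon(x,y)$ is the set of finite sequences $s=(w(1),\dots,w(k))$, $k\ge0$, of open sites with $x\preceq w(1)\prec\cdots\prec w(k)\prec y$; with $w(0)=x,w(k+1)=y$, $V(s)=\sum_{i=1}^{k+1}\|\mathrm{Proj}^{d_2}(w(i))-\mathrm{Proj}^{d_2}(w(i-1))\|_1$, $R(s)=k$, $S^{\mathcal D}_\epsilon(x,y)=\sup_{s\in\mathcal{D}_\epsilon(x,y)}(R(s)-V(s))$ and $S^{\mathcal D}_\epsilon(y)=S^{\mathcal D}_\epsilon(0,y)$. *)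

(* Defs.v *)
From HB Require Import structures.
From mathcomp Require Import all_boot all_order all_algebra.
From mathcomp Require Import all_classical all_reals all_analysis.
Set Implicit Arguments. Unset Strict Implicit. Unset Printing Implicit Defensive.
Import Order.TTheory GRing.Theory Num.Theory.
Local Open Scope ring_scope.
Local Open Scope classical_set_scope.

(* A site of Z^d = Z^{d1} x Z^{d2}: first component = first d1 coordinates,
   second component = last d2 coordinates (Proj^{d2}). *)
Definition site (d1 d2 : nat) := ({ffun 'I_d1 -> int} * {ffun 'I_d2 -> int})%type.

Section Dir.
Variables (d1 d2 : nat).
Implicit Types (x y w : site d1 d2).

Definition dprec x y : bool := [forall i, x.1 i < y.1 i].
Definition dpreceq x y : bool := [forall i, x.1 i <= y.1 i].

Definition proj_dist x y : int := \sum_(i < d2) `|y.2 i - x.2 i|.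

(* V(s) for s = (w(1),...,w(k)) with w(0) = x, w(k+1) = y *)
Fixpoint Vcost x (s : seq (site d1 d2)) y : int :=
  match s with
  | [::] => proj_dist x y
  | w :: s' => proj_dist x w + Vcost w s' y
  end.

Definition admissible (op : site d1 d2 -> bool) x y (s : seq (site d1 d2)) : bool :=
  all op s &&
  match s with
  | [::] => true
  | w :: s' => [&& dpreceq x w, path dprec w s' & dprec (last w s') y]
  end.

Definition SD (R : realType) (op : site d1 d2 -> bool) x y : R :=
  sup [set ((size s)%:R - (Vcost x s y)%:~R : R) | s in [set s | admissible op x y s]].

Definition site0 : site d1 d2 := ([ffun=> 0], [ffun=> 0]).

Definition floor_site (R : realType) (n : nat) (z : 'I_d1 -> R) : site d1 d2 :=
  ([ffun i => Num.floor (n%:R * z i)], [ffun=> 0]).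
End Dir.

(* The sites are independently open with probability eps: joint law on every
   finite family of distinct sites is the product Bernoulli(eps) law. *)
Definition iid_bernoulli_field (d1 d2 : nat) (R : realType) (dT : measure_display)
  (T : measurableType dT) (P : probability T R) (op : site d1 d2 -> T -> bool)
  (eps : R) : Prop :=
  (forall x, measurable [set w | op x w]) /\
  (forall (F : seq (site d1 d2)) (b : site d1 d2 -> bool), uniq F ->
     P [set w | forall x, x \in F -> op x w = b x] =
     (\prod_(x <- F) (if b x then eps else 1 - eps))%:E).

(* Main.v *)
Require Import Defs.
From HB Require Import structures.
From mathcomp Require Import all_boot all_order all_algebra.
From mathcomp Require Import all_classical all_reals all_analysis.
From mathcomp Require Import zify ring lra.
Import Order.TTheory GRing.Theory Num.Theory.
Local Open Scope ring_scope.
Local Open Scope classical_set_scope.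

Module Aux.
Set Implicit Arguments. Unset Strict Implicit. Unset Printing Implicit Defensive.


Section Comb.
Variables (d1 d2 : nat).
Notation site := (site d1 d2).
Implicit Types (a b c x y z w u v : site) (s : seq site).

Lemma pd_ge0 x y : 0 <= proj_dist x y.
Proof. by apply: sumr_ge0 => i _. Qed.

Lemma pd_tri x w y : proj_dist x y <= proj_dist x w + proj_dist w y.
Proof.
rewrite /proj_dist -big_split /=; apply: ler_sum => i _.
have -> : y.2 i - x.2 i = (w.2 i - x.2 i) + (y.2 i - w.2 i) by ring.
exact: ler_normD.
Qed.

Lemma V_ge x s y : proj_dist x y <= Vcost x s y.
Proof.
elim: s x => [|u s IH] x /=; first by [].
exact: le_trans (pd_tri x u y) (lerD (lexx _) (IH u)).
Qed.

Lemma V_ge0 x s y : 0 <= Vcost x s y.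
Proof. exact: le_trans (pd_ge0 x y) (V_ge x s y). Qed.

Lemma V_ge_mem x s y w : w \in s -> proj_dist x w + proj_dist w y <= Vcost x s y.
Proof.
elim: s x => [|u s IH] x //=; rewrite in_cons => /orP[/eqP->|ws].
  by rewrite lerD2l V_ge.
apply: le_trans (lerD (lexx _) (IH u ws)).
by rewrite addrA lerD2r pd_tri.
Qed.

Lemma V_tri x y s z : Vcost x s z <= proj_dist x y + Vcost y s z.
Proof.
case: s => [|u s] /=; first exact: pd_tri.
by rewrite addrA lerD2r pd_tri.
Qed.

Lemma V_cat x s1 y s2 z : Vcost x (s1 ++ s2) z <= Vcost x s1 y + Vcost y s2 z.
Proof.
elim: s1 x => [|u s1 IH] x /=; first exact: V_tri.
by rewrite -addrA lerD2l IH.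
Qed.

Lemma dprec_trans a b c : dprec a b -> dprec b c -> dprec a c.
Proof.
move=> /forallP h1 /forallP h2; apply/forallP => i; exact: lt_trans (h1 i) (h2 i).
Qed.

Lemma dprec_le_trans a b c : dprec a b -> dpreceq b c -> dprec a c.
Proof.
move=> /forallP h1 /forallP h2; apply/forallP => i; exact: lt_le_trans (h1 i) (h2 i).
Qed.

Lemma dle_prec_trans a b c : dpreceq a b -> dprec b c -> dprec a c.
Proof.
move=> /forallP h1 /forallP h2; apply/forallP => i; exact: le_lt_trans (h1 i) (h2 i).
Qed.

Lemma dle_trans a b c : dpreceq a b -> dpreceq b c -> dpreceq a c.
Proof.
move=> /forallP h1 /forallP h2; apply/forallP => i; exact: le_trans (h1 i) (h2 i).
Qed.

Lemma dprecW a b : dprec a b -> dpreceq a b.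
Proof. move=> /forallP h1; apply/forallP => i; exact: ltW (h1 i). Qed.

Lemma chain_mem u s y : path (@dprec d1 d2) u s -> dprec (last u s) y ->
  forall w, w \in u :: s -> dpreceq u w && dprec w y.
Proof.
elim: s u => [|a s IH] u /=.
  by move=> _ hy w; rewrite inE => /eqP->; rewrite hy andbT; apply/forallP => i.
move=> /andP[ua pa] hl w; rewrite in_cons => /orP[/eqP->|ws].
  have /andP[_ ay] := IH a pa hl a (mem_head _ _).
  rewrite (dprec_trans ua ay) andbT; by apply/forallP => i.
have /andP[aw wy] := IH a pa hl w ws.
by rewrite wy andbT (dle_trans (dprecW ua) aw).
Qed.

Lemma adm_mem op x y s w : admissible op x y s -> w \in s ->
  [&& op w, dpreceq x w & dprec w y].
Proof.
rewrite /admissible => /andP[aop]; case: s aop => [|u s] // aop.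
move=> /and3P[xu pu lu] ws; rewrite (allP aop w ws) /=.
have /andP[uw wy] := chain_mem pu lu ws.
by rewrite wy andbT (dle_trans xu uw).
Qed.

Lemma chain_size i u s y : path (@dprec d1 d2) u s -> dprec (last u s) y ->
  (size s).+1%:Z + u.1 i <= y.1 i.
Proof.
elim: s u => [|a s IH] u /=.
  move=> _ /forallP /(_ i). lia.
move=> /andP[/forallP /(_ i) ua pa] hl.
have := IH a pa hl. lia.
Qed.

Lemma adm_size i op x y s : x.1 i <= y.1 i ->
  admissible op x y s -> (size s)%:Z <= y.1 i - x.1 i.
Proof.
move=> hxy; rewrite /admissible => /andP[_]; case: s => [|u s].
  move=> _ /=; lia.
move=> /and3P[/forallP /(_ i) xu pu lu]; have := chain_size i pu lu => /=. lia.
Qed.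

Lemma adm_cat op x y z s1 s2 : dpreceq x y -> dpreceq y z ->
  admissible op x y s1 -> admissible op y z s2 -> admissible op x z (s1 ++ s2).
Proof.
move=> xy yz; rewrite /admissible all_cat.
case: s1 => [|u s1]; case: s2 => [|v s2] //=.
- by move=> _ /andP[-> /and3P[yv -> ->]]; rewrite (dle_trans xy yv).
- by rewrite !cats0 => /andP[-> /and3P[-> -> l1]] _; rewrite andbT (dprec_le_trans l1 yz).
move=> /andP[a1 /and3P[xu p1 l1]] /andP[a2 /and3P[yv p2 l2]].
move: a2 => /andP[-> ->]; rewrite a1 xu cat_path /= p1 p2 last_cat /= l2 andbT /=.
by rewrite andbT (dprec_le_trans l1 yv).
Qed.

Lemma adm_op op op' x y s : admissible op x y s -> all op' s -> admissible op' x y s.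
Proof. by rewrite /admissible => /andP[_ ->] ->. Qed.

Lemma adm_mono op x y y' s : dpreceq y y' -> admissible op x y s -> admissible op x y' s.
Proof.
move=> yy; rewrite /admissible; case: s => [|u s] //= /andP[-> /and3P[-> -> l]].
by rewrite (dprec_le_trans l yy).
Qed.

Lemma pd_eqr x y y' : (forall i, y.2 i = y'.2 i) -> proj_dist x y = proj_dist x y'.
Proof. by move=> h; apply: eq_bigr => i _; rewrite h. Qed.

Lemma V_eqr x s y y' : (forall i, y.2 i = y'.2 i) -> Vcost x s y = Vcost x s y'.
Proof. by move=> h; elim: s x => [|u s IH] x /=; [exact: pd_eqr|rewrite IH]. Qed.

Definition addS u v : site := ([ffun i => u.1 i + v.1 i], [ffun i => u.2 i + v.2 i]).
Definition subS u v : site := ([ffun i => u.1 i - v.1 i], [ffun i => u.2 i - v.2 i]).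

Lemma subSK u x : addS (subS u x) x = u.
Proof.
case: u => [u1 u2]; rewrite /addS /subS /=; congr pair; apply/ffunP => i;
by rewrite !ffunE subrK.
Qed.

Lemma add0S x : addS (site0 d1 d2) x = x.
Proof.
case: x => [u1 u2]; rewrite /addS /=; congr pair; apply/ffunP => i;
by rewrite !ffunE add0r.
Qed.

Lemma dprec_shift a b x : dprec (addS a x) (addS b x) = dprec a b.
Proof. by apply/forallP/forallP => h i; have := h i; rewrite !ffunE ltrD2r. Qed.

Lemma dpreceq_shift a b x : dpreceq (addS a x) (addS b x) = dpreceq a b.
Proof. by apply/forallP/forallP => h i; have := h i; rewrite !ffunE lerD2r. Qed.

Lemma pd_shift a b x : proj_dist (addS a x) (addS b x) = proj_dist a b.
Proof.
apply: eq_bigr => i _; rewrite !ffunE; congr (`|_|); ring.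
Qed.

Lemma V_shift a s b x :
  Vcost (addS a x) (map (addS^~ x) s) (addS b x) = Vcost a s b.
Proof.
elim: s a => [|u s IH] a /=; first exact: pd_shift.
by rewrite IH pd_shift.
Qed.

Lemma path_shift u s x : path (@dprec d1 d2) (addS u x) (map (addS^~ x) s) =
  path (@dprec d1 d2) u s.
Proof. by elim: s u => [|v s IH] u //=; rewrite IH dprec_shift. Qed.

Lemma adm_shift op a b x s :
  admissible op (addS a x) (addS b x) (map (addS^~ x) s) =
  admissible (fun v => op (addS v x)) a b s.
Proof.
rewrite /admissible all_map; congr andb; case: s => [|u s] //=.
by rewrite dpreceq_shift path_shift (last_map (fun v => addS v x)) dprec_shift.
Qed.

Lemma map_subSK s x : map (addS^~ x) (map (subS^~ x) s) = s.
Proof. by elim: s => //= u s ->; rewrite subSK. Qed.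


Section SDR.
Variable R : realType.

Definition valset op x y : set R :=
  [set ((size s)%:R - (Vcost x s y)%:~R : R) | s in [set s | admissible op x y s]].

Lemma SDE op x y : SD R op x y = sup (valset op x y).
Proof. by []. Qed.

Lemma val_int (n : nat) (v : int) : (n%:R : R) - v%:~R = (n%:Z - v)%:~R.
Proof. by rewrite intrB pmulrn. Qed.

Lemma sup_le_sup (A B : set R) : A !=set0 -> has_ubound B ->
  (forall r : R, A r -> exists2 t : R, B t & r <= t) -> sup A <= sup B.
Proof.
move=> A0 hB h; apply: ge_sup => // r /h [t Bt rt].
exact: le_trans rt (ub_le_sup hB Bt).
Qed.

Lemma valset0 op x y : (forall i, x.2 i = y.2 i) -> valset op x y 0.
Proof.
move=> h; exists [::] => //=; rewrite /proj_dist big1 ?subrr // => i _.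
by rewrite h subrr.
Qed.

Lemma valset_ub op x y i : x.1 i <= y.1 i -> ubound (valset op x y) ((y.1 i - x.1 i)%:~R).
Proof.
move=> hi r [s hs <-]; rewrite val_int ler_int.
have := adm_size hi hs; have := V_ge0 x s y; lia.
Qed.

Lemma valset_hasub op x y i : x.1 i <= y.1 i -> has_ubound (valset op x y).
Proof. by move=> hi; exists ((y.1 i - x.1 i)%:~R); exact: valset_ub. Qed.

Lemma SD_ge0 op x y i : (forall i, x.2 i = y.2 i) -> x.1 i <= y.1 i -> 0 <= SD R op x y.
Proof. by move=> h hi; rewrite SDE; apply: (ub_le_sup (valset_hasub op hi)); exact: valset0. Qed.

Lemma SD_le op x y i : (forall i, x.2 i = y.2 i) -> x.1 i <= y.1 i ->
  SD R op x y <= (y.1 i - x.1 i)%:~R.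
Proof. by move=> h hi; rewrite SDE; apply: ge_sup; [exists 0; exact: valset0| exact: valset_ub]. Qed.

Lemma SD_mono op x y y' i : (forall i, x.2 i = y.2 i) -> (forall i, y.2 i = y'.2 i) ->
  dpreceq y y' -> x.1 i <= y'.1 i -> SD R op x y <= SD R op x y'.
Proof.
move=> hx hy yy hi; rewrite !SDE; apply: sup_le_sup.
- by exists 0; exact: valset0.
- exact: valset_hasub hi.
move=> r [s hs <-]; exists ((size s)%:R - (Vcost x s y)%:~R) => //.
by exists s; [exact: adm_mono hs|rewrite (V_eqr _ _ hy)].
Qed.

Lemma SD_super op x y z (i : 'I_d1) : (forall i, x.2 i = y.2 i) -> (forall i, y.2 i = z.2 i) ->
  dpreceq x y -> dpreceq y z ->
  SD R op x y + SD R op y z <= SD R op x z.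
Proof.
move=> hxy hyz xy yz.
have hi : x.1 i <= z.1 i by move: xy yz => /forallP/(_ i) + /forallP/(_ i); apply: le_trans.
have hxz : forall j : 'I_d2, x.2 j = z.2 j by move=> j; rewrite hxy hyz.
rewrite -lerBrDr !SDE; apply: ge_sup; first by exists 0; exact: valset0.
move=> r1 [s1 h1 <-]; rewrite lerBrDr addrC -lerBrDr; apply: ge_sup.
  by exists 0; exact: valset0.
move=> r2 [s2 h2 <-]; rewrite lerBrDr.
apply: le_trans (ub_le_sup (valset_hasub op hi) _); last first.
  by exists (s1 ++ s2) => //; exact: adm_cat h1 h2.
rewrite !val_int -intrD ler_int size_cat.
have := V_cat x s1 y s2 z; lia.
Qed.

Lemma SD_shift op a b x : SD R op (addS a x) (addS b x) = SD R (fun v => op (addS v x)) a b.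
Proof.
rewrite !SDE; congr sup; apply/seteqP; split => r [s hs <-].
- exists (map (subS^~ x) s); first by rewrite /= -adm_shift map_subSK.
  by rewrite size_map -(V_shift _ _ _ x) map_subSK.
- exists (map (addS^~ x) s); first by rewrite /= adm_shift.
  by rewrite size_map V_shift.
Qed.

Lemma SD_restrict op (B : site -> bool) y i0 :
  (forall i, y.2 i = 0) -> 0 <= y.1 i0 ->
  (forall v, dpreceq (site0 d1 d2) v -> dprec v y -> \sum_i `|v.2 i| <= y.1 i0 -> B v) ->
  SD R op (site0 d1 d2) y = SD R (fun v => op v && B v) (site0 d1 d2) y.
Proof.
move=> hy hy0 hB.
have h0 : forall i, (site0 d1 d2).2 i = y.2 i by move=> i; rewrite hy ffunE.
have hi : (site0 d1 d2).1 i0 <= y.1 i0 by rewrite ffunE.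
apply/eqP; rewrite eq_le !SDE; apply/andP; split; apply: sup_le_sup.
- by exists 0; exact: valset0.
- exact: valset_hasub hi.
- move=> r [s hs <-].
  have [allB|] := boolP (all B s).
    exists ((size s)%:R - (Vcost (site0 d1 d2) s y)%:~R) => //.
    exists s => //; apply: adm_op (hs) _; apply/allP => w ws.
    by have /and3P[-> _ _] := adm_mem hs ws; rewrite (allP allB w ws).
  move=> /allPn [w ws nBw]; exists 0; first exact: valset0.
  have /and3P[_ w0 wy] := adm_mem hs ws.
  have hw : y.1 i0 < \sum_i `|w.2 i|.
    by rewrite ltNge; apply/negP => /(hB w w0 wy); rewrite (negbTE nBw).
  have := V_ge_mem (site0 d1 d2) y ws.
  have -> : proj_dist (site0 d1 d2) w = \sum_i `|w.2 i|.
    by apply: eq_bigr => i _; rewrite ffunE subr0.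
  have -> : proj_dist w y = \sum_i `|w.2 i|.
    by apply: eq_bigr => i _; rewrite hy sub0r normrN.
  have := adm_size hi hs; rewrite ffunE => hs' hV.
  rewrite val_int -[0]/(0%:~R) ler_int; lia.
- by exists 0; exact: valset0.
- exact: valset_hasub hi.
- move=> _ [s hs <-]; exists ((size s)%:R - (Vcost (site0 d1 d2) s y)%:~R) => //; exists s => //.
  by apply: adm_op (hs) _; apply/allP => w ws; have /andP[] := allP (proj1 (andP hs)) w ws.
Qed.

End SDR.
End Comb.



Section ExpFin.
Context (R : realType) (dT : measure_display) (T : measurableType dT) (P : probability T R).
Variables (I : finType) (c : I -> R) (E : I -> set T) (f : T -> I).
Hypothesis mE : forall i, measurable (E i).
Hypothesis hE : forall w i, E i w <-> f w = i.
Hypothesis c0 : forall i, 0 <= c i.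

Lemma fin_repr w : c (f w) = \sum_i c i * \1_(E i) w.
Proof.
rewrite (bigD1 (f w)) //= big1 ?addr0.
  by rewrite indicE mem_set ?mulr1 //; apply/hE.
move=> i /eqP ni; rewrite indicE memNset ?mulr0 //.
by move=> /hE /esym.
Qed.

Lemma fin_meas : measurable_fun setT (fun w => c (f w)).
Proof.
rewrite (_ : (fun w => c (f w)) = (fun w => \sum_(i <- index_enum I) c i * \1_(E i) w)).
  apply: measurable_sum => i; apply: measurable_realfun.measurable_funM; first exact: measurable_cst.
  exact: measurable_realfun.measurable_indic.
by apply/funext => w; rewrite fin_repr.
Qed.

Lemma fin_expect : ('E_P[fun w => c (f w)] = \sum_i (c i)%:E * P (E i))%E.
Proof.
rewrite unlock.
rewrite (_ : (fun w => (c (f w))%:E) = (fun w => \sum_(i <- index_enum I) ((c i)%:E * (\1_(E i) w)%:E)%E)).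
  rewrite ge0_integral_sum //; last first.
  - by move=> i w _; rewrite mule_ge0 // lee_fin // indicE.
  - move=> i; apply: (proj2 (@measurable_realfun.measurable_EFinP _ T R setT (fun w => c i * \1_(E i) w))).
    apply: measurable_realfun.measurable_funM; first exact: measurable_cst.
    exact: measurable_realfun.measurable_indic.
  apply: eq_bigr => i _; rewrite ge0_integralZl_EFin //.

  - by rewrite integral_indic // setIT.
  - apply: (proj2 (@measurable_realfun.measurable_EFinP _ T R setT (\1_(E i)))); exact: measurable_realfun.measurable_indic.
by apply/funext => w; rewrite fin_repr sumEFin.
Qed.
End ExpFin.



Section Model.
Variables (d1 d2 : nat) (i0 : 'I_d1).
Notation site := (site d1 d2).
Implicit Types (a b x y v : site).

Definition Lb y : nat := absz (y.1 i0).
Definition Nb y : nat := (\sum_i absz (y.1 i))%N.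
Definition FT y : finType :=
  ({ffun 'I_d1 -> 'I_(Nb y).+1} * {ffun 'I_d2 -> 'I_(Lb y + Lb y).+1})%type.
Definition enc y (u : FT y) : site :=
  ([ffun i => ((u.1 i : nat)%:Z)], [ffun i => (u.2 i : nat)%:Z - (Lb y)%:Z]).

Lemma enc_inj y : injective (@enc y).
Proof.
move=> [a1 a2] [b1 b2]; rewrite /enc /= => -[h1 h2].
congr pair; apply/ffunP => i; apply/val_inj.
  by move/ffunP: h1 => /(_ i); rewrite !ffunE => -[].
by move/ffunP: h2 => /(_ i); rewrite !ffunE => /addIr -[].
Qed.

Lemma enc_cover y v : dpreceq (site0 d1 d2) v -> dprec v y ->
  \sum_i `|v.2 i| <= y.1 i0 -> exists u : FT y, enc u = v.
Proof.
move=> /forallP h0 /forallP h1 hs.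
have hN i : (absz (v.1 i) < (Nb y).+1)%N.
  have := h0 i; have := h1 i; rewrite ffunE.
  have : (absz (y.1 i) <= Nb y)%N by rewrite /Nb (bigD1 i) //= leq_addr.
  lia.
have hy0 : 0 <= y.1 i0 by have := h0 i0; have := h1 i0; rewrite ffunE; lia.
have hL2 i : (Num.norm (v.2 i) <= (Lb y)%:Z)%R.
  have : (Num.norm (v.2 i) <= \sum_j Num.norm (v.2 j))%R by rewrite (bigD1 i) //= lerDl sumr_ge0.
  move: hs hy0; rewrite /Lb; lia.
have hL i : (absz (v.2 i + (Lb y)%:Z)%R < (Lb y + Lb y).+1)%N.
  by have := hL2 i; lia.
exists ([ffun i => inord (absz (v.1 i))], [ffun i => inord (absz (v.2 i + (Lb y)%:Z))]).
case: v h0 h1 hs hN hL hL2 => [v1 v2] /= h0 h1 hs hN hL hL2.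
rewrite /enc /=; congr pair; apply/ffunP => i; rewrite !ffunE /= inordK //.
  by have := h0 i; rewrite ffunE; lia.
have := hL i; have := hL2 i; rewrite /Lb; lia.
Qed.

Lemma addS_inj x : injective (fun a : site => addS a x).
Proof.
move=> [a1 a2] [b1 b2]; rewrite /addS /= => -[h1 h2].
congr pair; apply/ffunP => i.
  by move/ffunP: h1 => /(_ i); rewrite !ffunE => /addIr.
by move/ffunP: h2 => /(_ i); rewrite !ffunE => /addIr.
Qed.

Lemma addS0 y : addS y (site0 d1 d2) = y.
Proof.
case: y => [u1 u2]; rewrite /addS /=; congr pair; apply/ffunP => i;
by rewrite !ffunE addr0.
Qed.

Variables (R : realType) (dT : measure_display) (T : measurableType dT)
  (P : probability T R) (op : site -> T -> bool) (eps : R).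
Hypothesis hop : iid_bernoulli_field P op eps.

Definition gw y x w : {ffun FT y -> bool} := [ffun u => op (addS (enc u) x) w].
Definition Gv y (g : {ffun FT y -> bool}) : R :=
  SD R (fun v => [exists u, (enc u == v) && g u]) (site0 d1 d2) y.
Definition Ev y x (g : {ffun FT y -> bool}) : set T := [set w | gw y x w = g].
Definition pr y (g : {ffun FT y -> bool}) : R :=
  \prod_(u <- enum (FT y)) (if g u then eps else 1 - eps).
Definition bv y x (g : {ffun FT y -> bool}) v : bool :=
  [exists u, (addS (enc u) x == v) && g u].

Lemma bv_enc y x (g : {ffun FT y -> bool}) (u : FT y) : bv x g (addS (enc u) x) = g u.
Proof.
apply/existsP/idP => [[u' /andP[/eqP /addS_inj /enc_inj -> //]]|h].
by exists u; rewrite eqxx h.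
Qed.

Lemma ev_list (F : seq site) (b : site -> bool) :
  measurable [set w | forall v, v \in F -> op v w = b v].
Proof.
elim: F => [|v F IH].
  rewrite (_ : [set w | _] = setT); first exact: measurableT.
  by apply/seteqP; split => // w _ v; rewrite in_nil.
rewrite (_ : [set w | _] = [set w | op v w = b v] `&` [set w | forall u, u \in F -> op u w = b u]).
  apply: measurableI => //; case: (b v).
    exact: hop.1.
  rewrite (_ : [set w | op v w = false] = ~` [set w | op v w]).
    by apply: measurableC; exact: hop.1.
  by apply/seteqP; split => w /=; case: (op v w).
apply/seteqP; split => w /=.
  by move=> h; split => [|u uF]; apply: h; rewrite in_cons ?eqxx ?uF ?orbT.
by move=> [h1 h2] u; rewrite in_cons => /orP[/eqP->|/h2].
Qed.

Definition Flist y x := map (fun u => addS (@enc y u) x) (enum (FT y)).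

Lemma Ev_eq y x (g : {ffun FT y -> bool}) : Ev x g = [set w | forall v, v \in Flist y x -> op v w = bv x g v].
Proof.
apply/seteqP; split => w /=.
  by move=> <- v /mapP [u _ ->]; rewrite bv_enc ffunE.
move=> h; apply/ffunP => u; rewrite ffunE h ?bv_enc //.
by apply/mapP; exists u; rewrite ?mem_enum.
Qed.

Lemma Ev_meas y x (g : {ffun FT y -> bool}) : measurable (@Ev y x g).
Proof. by rewrite Ev_eq; exact: ev_list. Qed.

Lemma P_Ev y x (g : {ffun FT y -> bool}) : P (@Ev y x g) = (pr g)%:E.
Proof.
rewrite Ev_eq hop.2; last first.
  rewrite map_inj_uniq ?enum_uniq // => u u' /addS_inj; exact: enc_inj.
by rewrite /Flist big_map /pr; congr EFin; apply: eq_bigr => u _; rewrite bv_enc.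
Qed.

Lemma X_eq y x w : (forall i, y.2 i = 0) -> 0 <= y.1 i0 ->
  SD R (fun v => op v w) x (addS y x) = Gv (gw y x w).
Proof.
move=> hy hy0.
rewrite -{1}(add0S x) SD_shift.
have hB : forall v, dpreceq (site0 d1 d2) v -> dprec v y ->
    \sum_i `|v.2 i| <= y.1 i0 -> [exists u : FT y, enc u == v].
  by move=> v h0 h1 hs; have [u <-] := enc_cover h0 h1 hs; apply/existsP; exists u.
rewrite (SD_restrict _ _ hy hy0 hB) /Gv; congr SD; apply/funext => v.
case: (boolP [exists u : FT y, enc u == v]) => [/existsP [u /eqP <-]|nB].
  rewrite andbT; apply/idP/existsP => [h|[u' /andP[/eqP /enc_inj -> ]]].
    by exists u; rewrite eqxx ffunE h.
  by rewrite ffunE.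
rewrite andbF; apply/esym/existsP => -[u /andP[eu _]]; move: nB.
by rewrite negb_exists => /forallP /(_ u); rewrite eu.
Qed.

Definition Aval y : R := \sum_(g : {ffun FT y -> bool}) Gv g * pr g.

Lemma Gv_ge0 y (g : {ffun FT y -> bool}) : (forall i, y.2 i = 0) -> 0 <= y.1 i0 -> 0 <= @Gv y g.
Proof. by move=> hy hy0; apply: (@SD_ge0 _ _ _ _ _ _ i0); [move=> i; rewrite hy ffunE | rewrite ffunE]. Qed.

Lemma E_X y x : (forall i, y.2 i = 0) -> 0 <= y.1 i0 ->
  ('E_P[fun w => SD R (fun v => op v w) x (addS y x)] = (Aval y)%:E)%E.
Proof.
move=> hy hy0.
rewrite (_ : (fun w => _) = fun w => Gv (gw y x w)); last first.
  by apply/funext => w; rewrite X_eq.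
rewrite (@fin_expect _ _ _ P _ _ (@Ev y x)) //; last first.
- by move=> g; exact: Gv_ge0.
- exact: Ev_meas.
rewrite /Aval -sumEFin; apply: eq_bigr => g _; by rewrite P_Ev EFinM.
Qed.

Lemma X_meas y x : (forall i, y.2 i = 0) -> 0 <= y.1 i0 ->
  measurable_fun setT (fun w => SD R (fun v => op v w) x (addS y x)).
Proof.
move=> hy hy0.
rewrite (_ : (fun w => _) = fun w => Gv (gw y x w)); last first.
  by apply/funext => w; rewrite X_eq.
apply: (@fin_meas _ _ _ _ _ (@Ev y x)) => //; exact: Ev_meas.
Qed.

End Model.


Module FekM.
Import numFieldNormedType.Exports.

Lemma fekete (R : realType) (a : nat -> R) (M : R) :
  (forall n m, a n + a m <= a (n + m)%N) -> (forall n, 0 <= a n) ->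
  (forall n, a n <= M * n%:R) ->
  exists l : R, (fun n : nat => (n%:R)^-1 * a n) @ \oo --> l.
Proof.
move=> hsup ha0 haM.
have M0 : 0 <= M by have := haM 1%N; have := ha0 1%N; rewrite mulr1; lra.
set S := [set (n%:R)^-1 * a n | n in [set n | (0 < n)%N]].
have S1 : S (1%:R^-1 * a 1%N) by exists 1%N.
have ubS : ubound S M.
  move=> _ [n n0 <-]; rewrite ler_pdivrMl ?ltr0n //; first by rewrite mulrC.
have hS : has_sup S by split; [exists (1%:R^-1 * a 1%N) | exists M].
exists (sup S); apply/cvgrPdist_le => e e0.
have e20 : 0 < e / 2 by lra.
have [_ [m m0 <-] hm] := sup_adherent e20 hS.
have {}m0 : (0 < m)%N := m0.
set t := (m%:R)^-1 * a m in hm *.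
have tM : t <= M by apply: ubS; exists m.
have t0 : 0 <= t by rewrite mulr_ge0 // invr_ge0.
have mt : a m = m%:R * t by rewrite /t mulrA divff ?mul1r // pnatr_eq0 -lt0n.
have hqm : forall q, q%:R * a m <= a (q * m)%N.
  elim => [|q IH]; first by rewrite mul0r.
  by rewrite mulSn addnC; apply: le_trans (hsup _ _); rewrite mulrS mulrDl mul1r addrC lerD2r.
near=> n.
have nm : (m <= n)%N by near: n; exact: nbhs_infty_ge.
have hn : 2 * m%:R * M / e <= n%:R by near: n; exact: nbhs_infty_ger.
have n0 : (0 < n)%N by lia.
have nR : 0 < (n%:R : R) by rewrite ltr0n.
have upper : (n%:R)^-1 * a n <= sup S by apply: ub_le_sup; [exists M | exists n].
have an_low : n%:R * t - m%:R * M <= a n.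
  have := hqm (n %/ m)%N.
  have : a ((n %/ m) * m)%N + a (n %% m)%N <= a n by rewrite {3}(divn_eq n m); exact: hsup.
  have := ha0 (n %% m)%N.
  have hq : (n%:R - m%:R : R) <= (n %/ m)%:R * m%:R.
    rewrite -natrM -natrB //; rewrite ler_nat.
    have := divn_eq n m; have := ltn_pmod n m0; lia.
  rewrite mt => h1 h2 h3.
  have : (n%:R - m%:R) * t <= (n %/ m)%:R * m%:R * t by rewrite ler_wpM2r.
  have : m%:R * t <= m%:R * M by rewrite ler_wpM2l.
  lra.
have hmn : 2 * m%:R * M <= e * n%:R.
  by move: hn; rewrite ler_pdivrMr // [e * _]mulrC.
rewrite ger0_norm; last by rewrite subr_ge0.
rewrite lerBlDr -lerBlDl.
rewrite -(ler_pM2l nR) mulrA divff ?mul1r ?gt_eqF //.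
have : n%:R * (sup S - e / 2) <= n%:R * t by rewrite ler_wpM2l ?ltW.
lra.
Unshelve. all: by end_near. Qed.

End FekM.
End Aux.
Import Aux.
Import Aux.FekM.
Unset Implicit Arguments.

Lemma addS1E d1 d2 (a b : site d1 d2) i : (addS a b).1 i = a.1 i + b.1 i.
Proof. by rewrite /addS /= ffunE. Qed.
Lemma addS2E d1 d2 (a b : site d1 d2) i : (addS a b).2 i = a.2 i + b.2 i.
Proof. by rewrite /addS /= ffunE. Qed.

Theorem mainTheorem4 (d1 d2 : nat) (hd1 : (0 < d1)%N) (R : realType)
  (dT : measure_display) (T : measurableType dT) (P : probability T R)
  (eps : R) (heps : 0 <= eps <= 1)
  (op : site d1 d2 -> T -> bool) (hop : iid_bernoulli_field P op eps)
  (z : 'I_d1 -> R) (hz : forall i, 0 < z i) :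
  exists l : R,
    (fun n : nat => ((n%:R)^-1)%:E *
        'E_P[fun w => SD R (fun x => op x w) (site0 d1 d2) (floor_site d2 n z)])%E
      @ \oo --> l%:E.
Proof.
pose i0 : 'I_d1 := Ordinal hd1.
pose y n : site d1 d2 := floor_site d2 n z.
have hy2 n : forall i, (y n).2 i = 0 by move=> i; rewrite /y /floor_site /= ffunE.
have hy1 n i : 0 <= (y n).1 i by rewrite /y /floor_site /= ffunE floor_ge0 mulr_ge0 // ltW.
have s02 : forall n i, (site0 d1 d2).2 i = (y n).2 i by move=> n i; rewrite hy2 /site0 /=.
pose A n := Aval i0 eps (y n).
have hX n : (fun w => SD R (fun x => op x w) (site0 d1 d2) (y n)) =
    (fun w => SD R (fun v => op v w) (site0 d1 d2) (addS (y n) (site0 d1 d2))).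
  by rewrite addS0.
have hE n : ('E_P[fun w => SD R (fun x => op x w) (site0 d1 d2) (y n)] = (A n)%:E)%E.
  by rewrite hX (E_X (i0:=i0) hop).
have hM n : measurable_fun setT (fun w => SD R (fun x => op x w) (site0 d1 d2) (y n)).
  by rewrite hX; exact: (X_meas (i0:=i0) hop).
have X0 n w : 0 <= SD R (fun x => op x w) (site0 d1 d2) (y n).
  by apply: (@SD_ge0 _ _ R _ _ _ i0); [exact: s02| rewrite /site0 /= ffunE hy1].
have A0 n : 0 <= A n.
  rewrite -lee_fin -hE unlock; apply: integral_ge0 => w _; by rewrite lee_fin.
have AM n : A n <= z i0 * n%:R.
  rewrite -lee_fin -hE -(expectation_cst P) unlock.
  apply: ge0_le_integral => //.
  - by move=> w _; rewrite lee_fin.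
  - exact: (proj2 (@measurable_realfun.measurable_EFinP _ T R setT _) (hM n)).
  - apply: (proj2 (@measurable_realfun.measurable_EFinP _ T R setT (cst (z i0 * n%:R)))).
    exact: measurable_cst.
  move=> w _; rewrite lee_fin.
  apply: le_trans (@SD_le _ _ R _ _ _ i0 (s02 n) _) _.
    by rewrite /site0 /= ffunE hy1.
  rewrite /site0 /= !ffunE subr0 mulrC; exact: floor_le.
have Asup n m : A n + A m <= A (n + m)%N.
  pose Y w := SD R (fun x => op x w) (y n) (addS (y m) (y n)).
  have hEY : ('E_P[Y] = (A m)%:E)%E by rewrite (E_X (i0:=i0) hop).
  have hMY : measurable_fun setT Y by exact: (X_meas (i0:=i0) hop).
  have hY0 w : 0 <= Y w.
    rewrite /Y; apply: (@SD_ge0 _ _ R _ _ _ i0).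
      by move=> i; rewrite addS2E !hy2 addr0.
    by rewrite addS1E lerDr hy1.
  rewrite -lee_fin EFinD -hE -hEY -hE unlock.
  rewrite -ge0_integralD //; last first.
  - exact: (proj2 (@measurable_realfun.measurable_EFinP _ T R setT _) hMY).
  - by move=> w _; rewrite lee_fin.
  - exact: (proj2 (@measurable_realfun.measurable_EFinP _ T R setT _) (hM n)).
  - by move=> w _; rewrite lee_fin.
  apply: ge0_le_integral => //.
  - by move=> w _; apply: adde_ge0; rewrite lee_fin.
  - apply: (proj2 (@measurable_realfun.measurable_EFinP _ T R setT
      (fun w => SD R (fun x => op x w) (site0 d1 d2) (y n) + Y w))).
    exact: measurable_realfun.measurable_funD.
  - exact: (proj2 (@measurable_realfun.measurable_EFinP _ T R setT _) (hM _)).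
  move=> w _; rewrite -EFinD lee_fin.
  apply: le_trans (@SD_super _ _ R (fun x => op x w) (site0 d1 d2) (y n) (addS (y m) (y n)) i0 (s02 n) _ _ _) _.
  - by move=> i; rewrite addS2E !hy2 addr0.
  - by apply/forallP => i; rewrite /site0 /= ffunE hy1.
  - by apply/forallP => i; rewrite addS1E lerDr hy1.
  apply: (@SD_mono _ _ R _ (site0 d1 d2) (addS (y m) (y n)) (y (n+m)%N) i0).
  - by move=> i; rewrite (s02 n i) addS2E !hy2 addr0.
  - by move=> i; rewrite addS2E !hy2 addr0.
  - apply/forallP => i; rewrite addS1E /y /floor_site /= !ffunE.
    rewrite floor_ge_int intrD natrD mulrDl [_ + (m%:R * _)]addrC.
    by apply: lerD; exact: floor_le.
  - by rewrite /site0 /= ffunE hy1.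
have [l hl] := fekete Asup A0 AM.
exists l.
rewrite (_ : (fun n : nat => _) = (fun n : nat => ((n%:R)^-1 * A n)%:E)); last first.
  by apply/funext => n; rewrite (hE n) EFinM.
apply: cvg_EFin; first exact: nearW.
exact: hl.
Qed.
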